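(* Let $k$ be a positive integer, and let $T$ be a tree with $ex(T)=1$ such that $\ell_1, \ell_2, \ldots, \ell_{\alpha}$ are the terminal vertices of the exterior major vertex $v$ of $T$. Then $\dim_{k,f}(T)=\dim_f(T)$ if and only if $d(v, \ell_i) \le k$ for each $i\in\{1,2,\ldots,\alpha\}$.
   Context: $d(x,y)$ is the distance in the tree. For a function $g$ on $V(T)$ and $U\subseteq V(T)$, $g(U)=\sum_{s\in U}g(s)$. $R\{x,y\}=\{z: d(x,z)\ne d(y,z)\}$; $g:V(T)\to[0,1]$ is a resolving function if $g(R\{x,y\})\ge1$ for all distinct $x,y$; $\dim_f(T)$ is the minimum of $g(V(T))$ over resolving functions. For a positive integer $k$, $d_k(x,y)=\min\{d(x,y),k+1\}$, $R_k\{x,y\}=\{z: d_k(x,z)\neq d_k(y,z)\}$; $h:V(T)\to[0,1]$ is a $k$-truncated resolving function if $h(R_k\{x,y\})\ge 1$ for all distinct $x,y$, and $\dim_{k,f}(T)$ is the minimum of $h(V(T))$ over such $h$. A leaf has degree one; a major vertex has degree at least three. A leaf $\ell$ is a terminal vertex of a major vertex $v$ if $d(\ell,v)<d(\ell,w)$ for every other major vertex $w$; an exterior major vertex is a major vertex with at least one terminal vertex; $ex(T)$ is the number of exterior major vertices. *)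

(* Defs.v *)
From HB Require Import structures.
From mathcomp Require Import all_boot all_order all_algebra.
From mathcomp Require Import classical_sets reals.
Set Implicit Arguments. Unset Strict Implicit. Unset Printing Implicit Defensive.
Import Order.TTheory GRing.Theory Num.Theory.

Section Graphs.
Variables (T : finType) (e : rel T).

Definition simple_graph : Prop := symmetric e /\ irreflexive e.
Definition connected_graph : Prop := forall x y : T, connect e x y.
Definition acyclic_graph : Prop :=
  forall (x : T) (p : seq T),
    path e x p -> uniq (x :: p) -> 2 <= size p -> ~~ e (last x p) x.
Definition is_tree : Prop := [/\ simple_graph, connected_graph & acyclic_graph].

Definition walk_n (n : nat) (x y : T) : bool :=
  [exists p : n.-tuple T, path e x p && (last x p == y)].

(* graph distance: the least n < #|T| with a walk of length n from x to y
   (for connected graphs this is the usual shortest-path distance). *)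
Definition dist (x y : T) : nat := find (fun n => walk_n n x y) (iota 0 #|T|).

Definition distk (k : nat) (x y : T) : nat := minn (dist x y) k.+1.

Definition deg (x : T) : nat := #|[set y | e x y]|.
Definition is_leaf (x : T) : bool := deg x == 1.
Definition is_major (x : T) : bool := 3 <= deg x.

Definition is_terminal (l v : T) : bool :=
  [&& is_leaf l, is_major v &
      [forall w, (is_major w && (w != v)) ==> (dist l v < dist l w)]].

Definition is_exterior_major (v : T) : bool :=
  is_major v && [exists l, is_terminal l v].

Definition ex_num : nat := #|[set v | is_exterior_major v]|.

Variable R : realType.
Local Open Scope ring_scope.

Definition Rset (x y : T) : {set T} := [set z | dist x z != dist y z].
Definition Rkset (k : nat) (x y : T) : {set T} := [set z | distk k x z != distk k y z].

Definition resolving_fun (g : T -> R) : Prop :=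
  (forall s, 0 <= g s <= 1) /\
  (forall x y : T, x != y -> 1 <= \sum_(s in Rset x y) g s).

Definition k_resolving_fun (k : nat) (h : T -> R) : Prop :=
  (forall s, 0 <= h s <= 1) /\
  (forall x y : T, x != y -> 1 <= \sum_(s in Rkset k x y) h s).

(* dim_f and dim_{k,f}: minimum (= infimum; it is attained) of g(V(T)). *)
Definition dimf : R :=
  inf [set r | exists g : T -> R, resolving_fun g /\ r = \sum_(s : T) g s].
Definition dimkf (k : nat) : R :=
  inf [set r | exists h : T -> R, k_resolving_fun k h /\ r = \sum_(s : T) h s].

End Graphs.

(* Main.v *)
Require Import Defs.
From mathcomp Require Import all_boot all_order all_algebra.
From mathcomp Require Import zify.
From mathcomp Require Import classical_sets reals.
From mathcomp Require Import ring lra.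
Set Implicit Arguments. Unset Strict Implicit. Unset Printing Implicit Defensive.

Lemma nSS_neq n : (n.+2 == n) = false.
Proof. lia. Qed.
Lemma aux1 (b : bool) n : 3 <= b + n -> 0 < n.
Proof. case: b => /=; lia. Qed.
Lemma aux2 a b c : a <= b -> 0 < c -> a != b + c.
Proof. lia. Qed.
Lemma aux3 a b c a' b' : a <= b + c -> b.+1 = a' -> c.+1 = b' -> a = a' + b' -> False.
Proof. lia. Qed.

Lemma aux_a n : n.-1 != n.+1. Proof. lia. Qed.
Lemma aux_b n : n.+1 != n.-1. Proof. lia. Qed.
Lemma aux_c s t : s.-1 = t.+1 -> s.+1 != t.-1. Proof. lia. Qed.

Section TreeBasics.
Variables (T : finType) (e : rel T).
Hypothesis esym : symmetric e.
Hypothesis eirr : irreflexive e.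
Hypothesis econn : connected_graph e.
Hypothesis eacyc : acyclic_graph e.

Lemma walk_nP n x y :
  reflect (exists p : seq T, [/\ size p = n, path e x p & last x p = y])
          (walk_n e n x y).
Proof.
apply: (iffP existsP) => [[p /andP[hp /eqP hl]] | [p [hs hp hl]]].
  by exists (val p); rewrite size_tuple.
have Hs : size p == n by rewrite hs.
by exists (Tuple Hs); rewrite /= hp hl eqxx.
Qed.

Lemma dist_min m x y : walk_n e m x y -> dist e x y <= m.
Proof.
move=> hw; rewrite leqNgt; apply/negP => hlt.
have hf : m < size (iota 0 #|T|).
  apply: leq_trans hlt _; exact: find_size.
have := before_find 0 hlt; rewrite nth_iota; last by rewrite size_iota in hf.
by rewrite add0n hw.
Qed.

Lemma uniq_path_small (x : T) p : uniq (x :: p) -> size p < #|T|.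
Proof.
move=> hu; have := max_card (mem (x :: p)).
by rewrite (card_uniqP hu).
Qed.

Lemma shortest_path x y : exists p : seq T,
  [/\ path e x p, last x p = y, uniq (x :: p) & size p = dist e x y].
Proof.
have /connectP [p hp hl] := econn x y.
case: (shortenP hp) hl => p' hp' hu hsub hl.
have hw : walk_n e (size p') x y by apply/walk_nP; exists p'.
have hsm : size p' < #|T| by apply: uniq_path_small hu.
have hhas : has (fun n => walk_n e n x y) (iota 0 #|T|).
  by apply/hasP; exists (size p') => //; rewrite mem_iota.
have hfind : dist e x y < #|T|.
  by move: hhas; rewrite has_find size_iota.
have hwd : walk_n e (dist e x y) x y.
  have := nth_find 0 hhas; rewrite nth_iota //.
have [q [hq1 hq2 hq3]] := walk_nP _ _ _ hwd.
case: (shortenP hq2) hq3 => q' hq' huq hsubq hlq.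
exists q'; split => //.
apply/eqP; rewrite eqn_leq; apply/andP; split.
  rewrite -hq1; apply: uniq_leq_size => //; by case/andP: huq.
by apply: dist_min; apply/walk_nP; exists q'.
Qed.

Lemma walk_dist x y : walk_n e (dist e x y) x y.
Proof.
have [p [hp hl _ hs]] := shortest_path x y; apply/walk_nP; by exists p.
Qed.
Opaque dist.


Lemma split_first (A B : seq T) : has (mem B) A ->
  exists A1 c A2, [/\ A = rcons A1 c ++ A2, c \in B & ~~ has (mem B) A1].
Proof. by move=> h; case: (split_find h) => c A1 A2 hc hA1; exists A1, c, A2. Qed.

Lemma path_rev_sym x p : path (fun z => e^~ z) x p = path e x p.
Proof. by apply: eq_path => y z /=; rewrite esym. Qed.

Lemma cycle_contra s (A B : seq T) :
  path e s A -> path e s B -> uniq A -> uniq B ->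
  s \notin A -> s \notin B -> A != [::] -> B != [::] ->
  head s A != head s B -> last s A = last s B -> False.
Proof.
move=> pA pB uA uB sA sB nA nB hh hl.
have hB : has (mem B) A.
  apply/hasP; exists (last s A).
    by case: A nA {pA uA sA hh hl} => // a A' _; rewrite /= mem_last.
  by rewrite hl; case: B nB {pB uB sB hh hl} => // b B' _; rewrite /= mem_last.
have [A1 [c [A2 [eA cB hA1]]]] := split_first hB.
case/splitPr: cB hA1 pB uB sB nB hh hl => B1 B2 hA1 pB uB sB nB hh hl.
subst A.
set cyc := rcons A1 c ++ rev B1.
have pA1 : path e s (rcons A1 c) by move: pA; rewrite cat_path => /andP[].
have pB1 : path e s (rcons B1 c).
  by move: pB; rewrite -cat_rcons cat_path => /andP[].
have pB2 : path e c (rcons (rev B1) s).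
  move: pB1; rewrite -path_rev_sym -rev_path last_rcons belast_rcons.
  by rewrite rev_cons.
move: pB2; rewrite rcons_path => /andP[pB2 eB].
have pc : path e s cyc by rewrite /cyc cat_path pA1 last_rcons pB2.
have uc : uniq (s :: cyc).
  rewrite /= /cyc mem_cat mem_rev negb_or; apply/andP; split.
  - apply/andP; split; first by move: sA; rewrite mem_cat negb_or => /andP[].
    by move: sB; rewrite mem_cat negb_or => /andP[].
  - rewrite cat_uniq rev_uniq; apply/and3P; split.
    + by move: uA; rewrite cat_uniq => /andP[].
    + apply/hasP => -[x]; rewrite mem_rev => xB1 xA.
      move: xA; rewrite mem_rcons inE => /orP[/eqP xc | xA1].
        move: uB; rewrite cat_uniq => /and3P[_ /hasPn H _].
        by move: (H c (mem_head _ _)); rewrite -xc xB1.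
      move/hasP: hA1; apply; exists x => //.
      have : x \in B1 ++ c :: B2 by rewrite mem_cat xB1.
      by [].
    + by move: uB; rewrite cat_uniq => /and3P[].
have sc : 2 <= size cyc.
  rewrite /cyc size_cat size_rcons size_rev.
  case: A1 hh {hB pA uA sA nA hl hA1 pA1 pc uc cyc} => [|a1 A1] hh; last first.
    by case: B1 {pB uB sB nB hh pB1 pB2 eB} => [|b1 B1] //=; rewrite addn0.
  case: B1 hh {pB uB sB nB pB1 pB2 eB} => [|b1 B1] hh //=.
  by move: hh; rewrite /= eqxx.
have := eacyc pc uc sc; rewrite /cyc last_cat last_rcons eB //.
Qed.

Lemma path_unique s p q : path e s p -> path e s q ->
  uniq (s :: p) -> uniq (s :: q) -> last s p = last s q -> p = q.
Proof.
elim: p s q => [|a p IH] s [|b q] //=.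
- move=> _ _ _ /andP[hs _] hl.
  by move: hs; rewrite {1}hl mem_last.
- move=> _ _ /andP[hs _] _ hl.
  by move: hs; rewrite -{1}hl mem_last.
- move=> /andP[esa pa] /andP[esb pb] /andP[sa ua] /andP[sb ub] hl.
  case: (eqVneq a b) => [eab | nab].
    subst b; congr (_ :: _); exact: IH pa pb ua ub hl.
  exfalso; apply: (@cycle_contra s (a :: p) (b :: q)) => //=; try by [rewrite esa|rewrite esb].
Qed.


Notation d := (dist e).

Lemma dist_xx x : d x x = 0.
Proof. apply/eqP; rewrite -leqn0; apply: dist_min; apply/walk_nP; by exists [::]. Qed.

Lemma dist_eq0 x y : d x y = 0 -> x = y.
Proof. have [p [hp hl hu hs]] := shortest_path x y; move=> h0.
by move: hs; rewrite h0 => /size0nil hp0; move: hl; rewrite hp0. Qed.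

Lemma last_rev_belast (x : T) p : last (last x p) (rev (belast x p)) = x.
Proof. by case: p => [|y p] //=; rewrite rev_cons last_rcons. Qed.

Lemma dist_sym_le x y : d y x <= d x y.
Proof.
have [p [hp hl hu hs]] := shortest_path x y.
apply: dist_min; apply/walk_nP; exists (rev (belast x p)).
rewrite size_rev size_belast hs -hl last_rev_belast; split => //.
by rewrite rev_path path_rev_sym.
Qed.

Lemma dist_sym x y : d x y = d y x.
Proof. by apply/eqP; rewrite eqn_leq !dist_sym_le. Qed.

Lemma walk_cat m n x y z : walk_n e m x y -> walk_n e n y z -> walk_n e (m + n) x z.
Proof.
move=> /walk_nP [p [hs hp hl]] /walk_nP [q [hs' hq hl']].
apply/walk_nP; exists (p ++ q); rewrite size_cat cat_path last_cat hl hs hs' hp hq.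
by split.
Qed.

Lemma dist_tri x y z : d x z <= d x y + d y z.
Proof. apply: dist_min; apply: walk_cat; exact: walk_dist. Qed.

Lemma dist_edge x y : e x y -> d x y = 1.
Proof.
move=> hxy; apply/eqP; rewrite eqn_leq; apply/andP; split.
  by apply: dist_min; apply/walk_nP; exists [:: y]; rewrite /= hxy.
rewrite lt0n; apply/negP => /eqP /dist_eq0 exy.
by move: hxy; rewrite exy eirr.
Qed.

Lemma dist1_edge x y : d x y = 1 -> e x y.
Proof.
have [p [hp hl hu hs]] := shortest_path x y; move=> h1.
move: hs; rewrite h1; case: p hp hl {hu} => [|a [|b p]] //=.
move=> /andP[h _] hla _; by rewrite -hla.
Qed.

Lemma dist_edge_le x y z : e x y -> d x z <= (d y z).+1.
Proof. move=> hxy; have := dist_tri x y z; by rewrite (dist_edge hxy) add1n. Qed.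

Lemma dist_lt_of_mem a p x : path e a p -> x \in p -> d x (last a p) < size p.
Proof.
move=> hp /splitPr hx; case: hx hp => p1 p2.
rewrite cat_path last_cat /= => /andP[_ /andP[_ hp2]].
have : d x (last x p2) <= size p2 by apply: dist_min; apply/walk_nP; exists p2.
move/leq_ltn_trans; apply; by rewrite size_cat /= addnS ltnS leq_addl.
Qed.

Lemma step_closer x z : x != z -> exists y, e x y /\ (d y z).+1 = d x z.
Proof.
move=> nxz; have [p [hp hl hu hs]] := shortest_path x z.
case: p hp hl hu hs => [|y p] /=; first by move=> _ hxz; rewrite hxz eqxx in nxz.
move=> /andP[hxy hyp] hl hu hs; exists y; split => //.
apply/eqP; rewrite eqn_leq; apply/andP; split.
  rewrite -hs ltnS; apply: dist_min; apply/walk_nP; by exists p.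
exact: dist_edge_le.
Qed.

Lemma closer_unique x a b z : e x a -> e x b -> d a z < d x z -> d b z < d x z -> a = b.
Proof.
move=> hxa hxb ha hb.
have key c : e x c -> d c z < d x z -> exists pc,
    [/\ path e x (c :: pc), last c pc = z & uniq (x :: c :: pc)].
  move=> hxc hc; have [pc [hpc hlc huc hsc]] := shortest_path c z.
  exists pc; split; [by rewrite /= hxc | by [] | ].
  rewrite cons_uniq huc andbT inE negb_or; apply/andP; split.
    by apply/negP => /eqP exc; move: hxc; rewrite exc eirr.
  apply/negP => hx; have := dist_lt_of_mem hpc hx; rewrite hlc hsc.
  by rewrite ltnNge (ltnW hc).
have [pa [hpa hla hua]] := key a hxa ha.
have [pb [hpb hlb hub]] := key b hxb hb.
have := path_unique hpa hpb hua hub; rewrite /= hla hlb => /(_ erefl).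
by move=> [].
Qed.

Lemma dist_parity x y z : e x y -> d x z != d y z.
Proof.
move=> hxy; apply/negP => /eqP heq.
have [py [hpy hly huy hsy]] := shortest_path y z.
have [px [hpx hlx hux hsx]] := shortest_path x z.
have hu : uniq (x :: y :: py).
  rewrite cons_uniq huy andbT inE negb_or; apply/andP; split.
    by apply/negP => /eqP exy; move: hxy; rewrite exy eirr.
  apply/negP => hx; have := dist_lt_of_mem hpy hx; rewrite hly hsy heq.
  by rewrite ltnn.
have hp : path e x (y :: py) by rewrite /= hxy.
have := path_unique hp hpx hu hux; rewrite /= hly hlx => /(_ erefl) hyp.
by move: hsx; rewrite -hyp /= hsy heq => /eqP; rewrite -{2}(addn0 (d y z)) -addn1 eqn_add2l.
Qed.

Lemma dist_edge_cases x y z : e x y -> d y z = (d x z).+1 \/ (d y z).+1 = d x z.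
Proof.
move=> hxy; have h1 := dist_edge_le z hxy.
have h2 : d y z <= (d x z).+1 by apply: dist_edge_le; rewrite esym.
have h3 := dist_parity z hxy.
move: h1 h2 h3; move: (d x z) (d y z) => m n h1 h2 /eqP h3; lia.
Qed.


Definition inleg r u x := e r u && (d u x < d r x).

Lemma inleg_exists r x : x != r -> exists u, inleg r u x.
Proof.
move=> nxr; have nrx : r != x by rewrite eq_sym.
have [u [hru hu]] := step_closer nrx.
by exists u; rewrite /inleg hru -hu ltnSn.
Qed.

Lemma inleg_unique r u u' x : inleg r u x -> inleg r u' x -> u = u'.
Proof. move=> /andP[h1 h2] /andP[h3 h4]; exact: closer_unique h1 h3 h2 h4. Qed.

Lemma inleg_dist r u x : inleg r u x -> (d u x).+1 = d r x.
Proof.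
move=> /andP[hru hlt]; case: (dist_edge_cases x hru) => h //.
by move: hlt; rewrite h ltnNge leqnSn.
Qed.

Lemma notinleg_dist r u x : e r u -> ~~ inleg r u x -> d u x = (d r x).+1.
Proof.
move=> hru; rewrite /inleg hru /= -leqNgt => hle.
case: (dist_edge_cases x hru) => // h.
by move: hle; rewrite -h ltnn.
Qed.

Lemma inleg_neq r u x : inleg r u x -> x != r.
Proof. move=> /andP[_ h]; apply/negP => /eqP exr; by move: h; rewrite exr dist_xx. Qed.

Lemma inleg_edge r u : e r u -> inleg r u u.
Proof. by move=> h; rewrite /inleg h dist_xx (dist_edge h). Qed.

Lemma inleg_depth1 r u x : inleg r u x -> d r x = 1 -> x = u.
Proof.
move=> hi h1; have := inleg_dist hi; rewrite h1 => -[] /dist_eq0; by [].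
Qed.

Lemma inleg_parent r u x p : inleg r u x -> x != u -> e x p ->
  (d r p).+1 = d r x -> inleg r u p.
Proof.
move=> hi nxu hxp hp.
have hpr : p != r.
  apply/negP => /eqP epr; move: hp; rewrite epr dist_xx => h1.
  by move: nxu; rewrite (inleg_depth1 hi (sym_equal h1)) eqxx.
have [u' hu'] := inleg_exists hpr.
suff hx : inleg r u' x by rewrite (inleg_unique hi hx).
have hd := inleg_dist hu'.
move: (hu') => /andP[hru' _]; rewrite /inleg hru' /=.
apply: leq_ltn_trans (dist_tri u' p x) _.
have hpx : e p x by rewrite esym.
by rewrite (dist_edge hpx) addn1 hd -hp ltnSn.
Qed.

Lemma parent_exists r x : x != r -> exists p, e x p /\ (d r p).+1 = d r x.
Proof.
move=> nxr; have [p [hxp hp]] := step_closer nxr.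
by exists p; rewrite (dist_sym r p) (dist_sym r x).
Qed.

Lemma cross_dist r u x z : e r u -> inleg r u x -> ~~ inleg r u z ->
  d x z = d r x + d r z.
Proof.
move=> hru hx hz.
suff H : forall n x, d r x = n -> x = r \/ inleg r u x -> d x z = n + d r z.
  by apply: H; [reflexivity | right].
clear hx; elim/ltn_ind => n IH {}x hn hor.
case: (eqVneq x r) => [exr | nxr].
  by move: hn; rewrite exr dist_xx => <-.
have {hor} hix : inleg r u x by case: hor => // exr; rewrite exr eqxx in nxr.
case: (eqVneq x u) => [exu | nxu].
  subst x; rewrite (notinleg_dist hru hz) -hn (dist_edge hru); by rewrite add1n.
have [p [hxp hp]] := parent_exists nxr.
have hip := inleg_parent hix nxu hxp hp.
have hpn : d r p < n by rewrite -hn -hp.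
have IHp := IH _ hpn p erefl (or_intror hip).
have hpr := inleg_neq hip.
have [q [hpq hq]] := parent_exists hpr.
have hqor : q = r \/ inleg r u q.
  case: (eqVneq p u) => [epu | npu]; last by right; exact: inleg_parent hip npu hpq hq.
  left; symmetry; apply: dist_eq0; move: hq; rewrite epu (dist_edge hru); by case.
have hqn : d r q < n by rewrite -hn -hp -hq ltnW.
have IHq := IH _ hqn q erefl hqor.
have hpx : e p x by rewrite esym.
case: (dist_edge_cases z hpx) => h.
  by rewrite h IHp -hn -hp addSn.
exfalso.
have hxz : d x z < d p z by rewrite -h.
have hqz : d q z < d p z by rewrite IHq IHp -hq ltn_add2r.
have exq := closer_unique hpx hpq hxz hqz.
move: hq; rewrite -exq -hp => /eqP; by rewrite nSS_neq.
Qed.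


Lemma dist_pos x y : x != y -> 0 < d x y.
Proof. move=> nxy; rewrite lt0n; apply/negP => /eqP /dist_eq0 h; by rewrite h eqxx in nxy. Qed.

Lemma leaf_of_max r z : z != r -> (forall y, e z y -> d r y < d r z) -> is_leaf e z.
Proof.
move=> nzr hmax; have [p [hzp hp]] := parent_exists nzr.
rewrite /is_leaf /deg; apply/eqP.
suff -> : [set y | e z y] = [set p] by rewrite cards1.
apply/setP => y; rewrite !inE; apply/idP/eqP => [hzy | ->] //.
apply: (closer_unique (z:=r) hzy hzp).
  rewrite (dist_sym y r) (dist_sym z r); exact: hmax hzy.
by rewrite (dist_sym p r) (dist_sym z r) -hp.
Qed.

Lemma same_leg_depth r (hdeg : forall w, w != r -> deg e w <= 2) u x y :
  inleg r u x -> inleg r u y -> d r x = d r y -> x = y.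
Proof.
move=> hx hy hxy.
suff H : forall n x y, d r x = n.+1 -> inleg r u x -> inleg r u y -> d r x = d r y -> x = y.
  have := inleg_neq hx => /dist_pos; rewrite dist_sym.
  case hn: (d r x) => [|n] // _; exact: H hn hx hy hxy.
clear x y hx hy hxy.
elim => [|n IH] x y hn hx hy hxy.
  by rewrite (inleg_depth1 hx hn) (inleg_depth1 hy (etrans (sym_equal hxy) hn)).
have hux : x != u.
  apply/negP => /eqP exu; move: hn; rewrite exu.
  by move: hx => /andP[hru _]; rewrite (dist_edge hru).
have huy : y != u.
  apply/negP => /eqP eyu; move: hn; rewrite hxy eyu.
  by move: hx => /andP[hru _]; rewrite (dist_edge hru).
have [px [hxpx hpx]] := parent_exists (inleg_neq hx).
have [py [hypy hpy]] := parent_exists (inleg_neq hy).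
have ipx := inleg_parent hx hux hxpx hpx.
have ipy := inleg_parent hy huy hypy hpy.
have epxy : px = py.
  apply: (IH px py _ ipx ipy); first by apply/eqP; rewrite -eqSS hpx hn.
  by apply/eqP; rewrite -eqSS hpx hpy hxy.
subst py.
have [q [hpq hq]] := parent_exists (inleg_neq ipx).
apply/eqP; apply: contraT => nxy.
have hxq : x != q by apply/negP => /eqP exq; move: hpx; rewrite -hq exq => /eqP; rewrite nSS_neq.
have hyq : y != q by apply/negP => /eqP eyq; move: hpy; rewrite -hq eyq => /eqP; rewrite nSS_neq.
have h3 : 3 <= deg e px.
  have hu : uniq [:: x; y; q] by rewrite /= !inE negb_or nxy hxq hyq.
  have <- : #|[:: x; y; q]| = 3 by apply/card_uniqP.
  rewrite /deg; apply: subset_leq_card; apply/fintype.subsetP => z.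
  by rewrite !inE ?orbF => /or3P[] /eqP ->; rewrite // esym.
by have := hdeg px (inleg_neq ipx); rewrite leqNgt h3.
Qed.


Lemma deep_leaf v u : e v u -> exists l, is_leaf e l /\ forall x, d v x <= d v l.
Proof.
move=> hvu.
have [l _ hmax] := @arg_maxnP T v predT (fun z => d v z) isT.
exists l; split; last by move=> x; exact: hmax.
have hlv : l != v.
  apply/negP => /eqP elv; have := hmax u isT; rewrite elv dist_xx (dist_edge hvu).
  by [].
apply: (leaf_of_max hlv) => y hly.
case: (dist_edge_cases v hly) => h; last by rewrite (dist_sym v y) (dist_sym v l) -h ltnSn.
have := hmax y isT; rewrite (dist_sym v y) h (dist_sym v l) => H.
have : (d l v).+1 <= d l v := H. by rewrite ltnn.
Qed.

Lemma no_other_major v : is_exterior_major e v -> ex_num e = 1 ->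
  forall w, w != v -> ~~ is_major e w.
Proof.
move=> hv hex w0' nw0' ; apply/negP => hw0'.
have Pw0' : is_major e w0' && (w0' != v) by rewrite hw0' nw0'.
have [w0 /andP[hw0 nw0v] hmaxw] := @arg_maxnP T w0' (fun z => is_major e z && (z != v)) (fun z => d v z) Pw0'.
have [pw [hw0pw hpw]] := parent_exists nw0v.
have [c hc] : exists c, c \in [set y | e w0 y] :\ pw.
  apply/card_gt0P; move: hw0; rewrite /is_major /deg (cardsD1 pw); exact: aux1.
move: hc; rewrite !inE => /andP[ncp hw0c].
have hdc : d v c = (d v w0).+1.
  case: (dist_edge_cases v hw0c) => h; first by rewrite dist_sym h dist_sym.
  exfalso; move/eqP: ncp; apply.
  apply: (closer_unique (z:=v) hw0c hw0pw); first by rewrite -h.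
  by rewrite (dist_sym pw) (dist_sym w0) -hpw.
pose P z := d v z == d v w0 + d w0 z.
have Pc : P c by rewrite /P hdc (dist_edge hw0c) addn1.
have [l Pl hmaxl] := @arg_maxnP T c P (fun z => d v z) Pc.
have hcl := hmaxl c Pc; rewrite /= hdc in hcl.
have hlv : l != v by apply/negP => /eqP elv; move: hcl; rewrite elv dist_xx.
have hlw0 : l != w0 by apply/negP => /eqP elw; move: hcl; rewrite elw ltnn.
have hleaf : is_leaf e l.
  apply: (leaf_of_max hlv) => y hly.
  case: (dist_edge_cases v hly) => h; last by rewrite (dist_sym v y) (dist_sym v l) -h ltnSn.
  exfalso.
  have Py : P y.
    rewrite /P eqn_leq (dist_tri v w0 y) /=.
    have hyl : e y l by rewrite esym.
    have := @dist_edge_le y l w0 hyl.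
    rewrite (dist_sym v y) h (dist_sym l v); move/eqP: Pl => ->.
    by rewrite (dist_sym l w0) (dist_sym y w0) -addnS leq_add2l.
  by have := hmaxl y Py; rewrite /= (dist_sym v y) h (dist_sym l v) ltnn.
have notP w : is_major e w -> w != w0 -> ~~ P w.
  move=> hw nww0; rewrite /P; case: (eqVneq w v) => [-> | nwv].
    rewrite dist_xx eq_sym addn_eq0 negb_and; apply/orP; left.
    by rewrite -lt0n dist_pos // eq_sym.
  have := hmaxw w; rewrite /= hw nwv => /(_ isT) hle.
  have := dist_pos nww0; rewrite dist_sym.
  exact: aux2.
have [c' hc'] := inleg_exists hlw0.
have hc'v : ~~ inleg w0 c' v.
  apply/negP => hc'v.
  have h1 := inleg_dist hc'v; have h2 := inleg_dist hc'.
  have htri := dist_tri v c' l; rewrite (dist_sym c' v) (dist_sym w0 v) in h1.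
  exact: aux3 htri h1 h2 (eqP Pl).
have hw0c' : e w0 c' by move: hc' => /andP[].
have hterm : is_terminal e l w0.
  rewrite /is_terminal hleaf hw0 /=; apply/forallP => w; apply/implyP => /andP[hw nww0].
  have hnP := notP w hw nww0.
  have hc'w : ~~ inleg w0 c' w.
    apply/negP => hc'w; move/negP: hnP; apply.
    have := cross_dist hw0c' hc'w hc'v.
    by rewrite /P (dist_sym w v) (dist_sym w0 v) addnC => ->.
  rewrite (cross_dist hw0c' hc' hc'w) (dist_sym l w0) -{1}(addn0 (d w0 l)).
  by rewrite ltn_add2l dist_pos // eq_sym.
have hw0ex : is_exterior_major e w0.
  by rewrite /is_exterior_major hw0; apply/existsP; exists l.
move: hex; rewrite /ex_num => /eqP; apply/negP; rewrite neq_ltn; apply/orP; right.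
have <- : #|[set v; w0]| = 2 by rewrite cards2 eq_sym nw0v.
apply: subset_leq_card; apply/fintype.subsetP => z; rewrite !inE => /orP[] /eqP -> //.
Qed.


Section Spider.
Variable v : T.
Hypothesis hvmaj : is_major e v.
Hypothesis hdeg : forall w, w != v -> deg e w <= 2.

Lemma leg_dist_in u z : inleg v u z -> (d u z).+1 = d v z.
Proof. exact: inleg_dist. Qed.

Lemma leg_dist_out u z : e v u -> ~~ inleg v u z -> d u z = (d v z).+1.
Proof. exact: notinleg_dist. Qed.

Lemma nbr_card : 3 <= #|[set u | e v u]|.
Proof. exact: hvmaj. Qed.

Lemma two_others a : exists u1 u2, [/\ u1 != u2, e v u1, e v u2, u1 != a & u2 != a].
Proof.
have h : 1 < #|[set u | e v u] :\ a|.
  have := nbr_card; rewrite (cardsD1 a); case: (a \in _) => /=; lia.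
have [u1 hu1] : exists u1, u1 \in [set u | e v u] :\ a.
  by apply/card_gt0P; apply: ltn_trans h.
move: h; rewrite (cardsD1 u1) hu1 add1n ltnS => /card_gt0P [u2 hu2].
move: hu1 hu2; rewrite !inE => /andP[n1 h1] /andP[n21 /andP[n2 h2]].
by exists u1, u2; rewrite eq_sym n21.
Qed.

Lemma one_other a b : exists u, [/\ e v u, u != a & u != b].
Proof.
have [u1 [u2 [n12 h1 h2 n1 n2]]] := two_others a.
case: (eqVneq u1 b) => [e1b | n1b]; last by exists u1.
exists u2; split => //; by rewrite -e1b eq_sym.
Qed.

Lemma sep_pair x y : x != y -> exists u1 u2,
  [/\ u1 != u2, e v u1, e v u2, d u1 x != d u1 y & d u2 x != d u2 y].
Proof.
wlog: x y / x != v.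
  move=> W nxy; case: (eqVneq x v) => [exv | nxv]; last exact: W.
  have nyv : y != v by rewrite -exv eq_sym.
  have nyx : y != x by rewrite eq_sym.
  have [u1 [u2 [n12 h1 h2 hd1 hd2]]] := W y x nyv nyx.
  by exists u1, u2; split => //; rewrite eq_sym.
move=> nxv nxy.
have [bx hbx] := inleg_exists nxv.
case: (eqVneq y v) => [eyv | nyv].
  subst y.
  have [u1 [u2 [n12 h1 h2 n1 n2]]] := two_others bx.
  have hdist u : e v u -> u != bx -> d u x != d u v.
    move=> hu nu; rewrite (dist_sym u v) (dist_edge hu).
    have hn : ~~ inleg v u x by apply/negP => hi; move/eqP: nu; apply; exact: inleg_unique hi hbx.
    rewrite (leg_dist_out hu hn) eqSS -lt0n; apply: dist_pos; by rewrite eq_sym.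
  by exists u1, u2; rewrite n12 h1 h2 !hdist.
have [b' hb'] := inleg_exists nyv.
have gen u z : e v u -> d u z = if inleg v u z then (d v z).-1 else (d v z).+1.
  move=> hu; case: ifP => hi; last by rewrite leg_dist_out // hi.
  by rewrite -(leg_dist_in hi).
have hx1 := inleg_dist hbx; have hy1 := inleg_dist hb'.
have bxN : e v bx by move: hbx => /andP[].
have byN : e v b' by move: hb' => /andP[].
have inx u : inleg v u x = (u == bx).
  apply/idP/eqP => [hi | ->] //; exact: inleg_unique hi hbx.
have iny u : inleg v u y = (u == b').
  apply/idP/eqP => [hi | ->] //; exact: inleg_unique hi hb'.
move: hx1 hy1; move Es : (d v x) => s; move Et : (d v y) => t hs ht.
case: (eqVneq bx b') => [eb | nb].
  subst b'.
  have nst : s != t.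
    apply/negP => /eqP est; move/eqP: nxy; apply.
    apply: (same_leg_depth hdeg hbx hb'); by rewrite Es Et.
  have [u1 [u2 [n12 h1 h2 _ _]]] := two_others v.
  exists u1, u2; rewrite n12 h1 h2 (gen u1 x) // (gen u1 y) // (gen u2 x) // (gen u2 y) //.
  rewrite !inx !iny Es Et; split => //.
    by case: (u1 == bx); rewrite ?eqSS //; move: hs ht nst => <- <-; rewrite eqSS.
  by case: (u2 == bx); rewrite ?eqSS //; move: hs ht nst => <- <-; rewrite eqSS.
have vx1 : d bx x = s.-1 by rewrite -hs.
have vy2 : d b' y = t.-1 by rewrite -ht.
have vy1 : d bx y = t.+1 by rewrite (gen bx y) // iny (negbTE nb) Et.
have vx2 : d b' x = s.+1 by rewrite (gen b' x) // inx eq_sym (negbTE nb) Es.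
case: (eqVneq s t) => [est | nst].
  rewrite -est in vy1 vy2; exists bx, b'; rewrite nb bxN byN vx1 vy1 vx2 vy2; split => //.
    exact: aux_a.
  exact: aux_b.
have [w [hw nwx nwy]] := one_other bx b'.
have wx : d w x = s.+1 by rewrite (gen w x) // inx (negbTE nwx) Es.
have wy : d w y = t.+1 by rewrite (gen w y) // iny (negbTE nwy) Et.
case: (eqVneq s.-1 t.+1) => [h | h].
  exists b', w; rewrite byN hw vx2 vy2 wx wy eqSS eq_sym nwy nst; split => //.
  exact: aux_c.
exists bx, w; rewrite bxN hw vx1 vy1 wx wy eqSS eq_sym nwx nst; by split.
Qed.


Lemma anc b j : 0 < j -> forall n x, inleg v b x -> d v x = j + n ->
  exists y, inleg v b y /\ d v y = j.
Proof.
move=> hj; elim => [|n IH] x hx hdx; first by exists x; rewrite hdx addn0.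
have hb : e v b by move: hx => /andP[].
have nxb : x != b.
  apply/negP => /eqP exb; move: hdx; rewrite exb (dist_edge hb); move: hj; clear; lia.
have [p [hxp hp]] := parent_exists (inleg_neq hx).
apply: (IH p (inleg_parent hx nxb hxp hp)).
by apply/eqP; rewrite -eqSS hp hdx addnS.
Qed.

Lemma Rk_incl k b xk xk1 : inleg v b xk -> inleg v b xk1 ->
  d v xk = k -> d v xk1 = k.+1 ->
  forall z, z \in Rkset e k xk xk1 -> (z == v) || inleg v b z.
Proof.
move=> h1 h2 hd1 hd2 z; rewrite inE; apply: contraTT; rewrite negb_or => /andP[nzv nz].
have hb : e v b by move: h1 => /andP[].
have hz : 0 < d v z by apply: dist_pos; rewrite eq_sym.
rewrite /distk (cross_dist hb h1 nz) (cross_dist hb h2 nz) hd1 hd2.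
rewrite (minn_idPr _) ?(minn_idPr _) //; move: hz; clear; lia.
Qed.

Definition br z := if [pick u | inleg v u z] is Some u then u else v.

Lemma br_spec z : z != v -> inleg v (br z) z.
Proof.
move=> nzv; rewrite /br; case: pickP => [u hu | h] //.
have [u hu] := inleg_exists nzv; by rewrite h in hu.
Qed.

Lemma br_eq u z : e v u -> ((z != v) && (br z == u)) = inleg v u z.
Proof.
move=> hu; apply/idP/idP => [/andP[nzv /eqP <-] | hi]; first exact: br_spec.
rewrite (inleg_neq hi) /=; apply/eqP; exact: inleg_unique (br_spec (inleg_neq hi)) hi.
Qed.

Lemma Rset_legs u u' z : e v u -> e v u' -> z \in Rset e u u' -> inleg v u z || inleg v u' z.
Proof.
move=> hu hu'; rewrite inE; apply: contraTT; rewrite negb_or => /andP[n1 n2].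
by rewrite (leg_dist_out hu n1) (leg_dist_out hu' n2) eqxx.
Qed.

Lemma Rk_sub k x y z : z \in Rkset e k x y -> z \in Rset e x y.
Proof. rewrite !inE /distk; apply: contraNN => /eqP ->; by []. Qed.


Section Reals.
Variable R : realType.
Import GRing.Theory Num.Theory Order.TTheory.
Local Open Scope ring_scope.

Definition aleg (g : T -> R) u := \sum_(z | inleg v u z) g z.

Lemma sum_decomp g : \sum_z g z = g v + \sum_(u | e v u) aleg g u.
Proof.
rewrite (bigD1 v) //=; congr (_ + _).
rewrite (partition_big br (fun u => e v u)) /=; last first.
  move=> z nzv; by move: (br_spec nzv) => /andP[].
apply: eq_bigr => u hu; apply: eq_bigl => z; exact: br_eq.
Qed.

Lemma sum_or (g : T -> R) (P Q : pred T) : (forall z, 0 <= g z) ->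
  \sum_(z | P z || Q z) g z <= \sum_(z | P z) g z + \sum_(z | Q z) g z.
Proof.
move=> g0; rewrite [X in X <= _]big_mkcond [X in _ <= X + _]big_mkcond.
rewrite [X in _ <= _ + X]big_mkcond -big_split /=; apply: ler_sum => z _.
by case: (P z); case: (Q z) => /=; rewrite ?addr0 ?add0r ?lerDl ?g0.
Qed.

Lemma sum_sub (g : T -> R) (A : {set T}) (P : pred T) : (forall z, 0 <= g z) ->
  (forall z, z \in A -> P z) -> \sum_(z in A) g z <= \sum_(z | P z) g z.
Proof.
move=> g0 hP; rewrite [X in X <= _]big_mkcond [X in _ <= X]big_mkcond.
apply: ler_sum => z _; case: ifP => hA; first by rewrite hP.
by case: ifP.
Qed.

Lemma one_le (F : T -> R) (A : {set T}) u : (forall z, 0 <= F z) ->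
  u \in A -> F u <= \sum_(z in A) F z.
Proof.
move=> F0 hu; rewrite (bigD1 u) //= lerDl; apply: sumr_ge0 => z _; exact: F0.
Qed.

Lemma two_le (F : T -> R) (A : {set T}) u1 u2 : (forall z, 0 <= F z) ->
  u1 != u2 -> u1 \in A -> u2 \in A -> F u1 + F u2 <= \sum_(z in A) F z.
Proof.
move=> F0 n12 h1 h2; rewrite (bigD1 u1) //= (bigD1 u2) /=; last by rewrite h2 eq_sym n12.
rewrite addrA lerDl; apply: sumr_ge0 => z _; exact: F0.
Qed.

Lemma pair_bound (a : T -> R) (S : {set T}) :
  (forall u u', u \in S -> u' \in S -> u != u' -> 1 <= a u + a u') ->
  (2 <= #|S|)%N -> #|S|%:R / 2 <= \sum_(u in S) a u.
Proof.
move=> hpair h2.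
have inner u : u \in S -> 2 * a u + (#|S|%:R - 1) <= \sum_(u' in S) (a u + a u').
  move=> hu; rewrite (bigD1 u) //= mulr_natl mulr2n lerD2l.
  have -> : \sum_(i in S | i != u) (a u + a i) = \sum_(i in S :\ u) (a u + a i).
    by apply: eq_bigl => i; rewrite in_setD1 andbC.
  have hc : #|S|%:R - 1 = \sum_(i in S :\ u) (1 : R).
    rewrite sumr_const (cardsD1 u S) hu /= add1n -natr1 addrK.
    by [].
  rewrite hc; apply: ler_sum => i; rewrite in_setD1 => /andP[niu hi].
  by apply: hpair => //; rewrite eq_sym.
have hsum : \sum_(u in S) (2 * a u + (#|S|%:R - 1)) <= \sum_(u in S) \sum_(u' in S) (a u + a u').
  by apply: ler_sum => u hu; exact: inner.
move: hsum; rewrite big_split /= -mulr_sumr sumr_const.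
under eq_bigr do rewrite big_split /= sumr_const.
rewrite big_split /= sumr_const.
have E1 : \sum_(i in S) (a i *+ #|S|) = (\sum_(i in S) a i) *+ #|S| := sumrMnl _ _ _ _.
rewrite E1; move: (\sum_(i in S) a i) => A.
rewrite -(mulr_natr A) -(mulr_natr (#|S|%:R - 1)).
have hn : (2 : R) <= #|S|%:R by rewrite ler_nat.
move: hn; move: (#|S|%:R : R) => N hn H.
nra.
Qed.


Lemma pair_legs (g : T -> R) u u' : (forall z, 0 <= g z) -> e v u -> e v u' ->
  1 <= \sum_(z in Rset e u u') g z -> 1 <= aleg g u + aleg g u'.
Proof.
move=> g0 hu hu' h1; apply: (le_trans h1); apply: le_trans (sum_or _ _ g0).
apply: sum_sub => // z hz; exact: Rset_legs hu hu' hz.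
Qed.

Lemma sumN (F : T -> R) : \sum_(u | e v u) F u = \sum_(u in [set u | e v u]) F u.
Proof. by apply: eq_bigl => u; rewrite inE. Qed.

Lemma lower_bound (g : T -> R) : (forall z, 0 <= g z) ->
  (forall u u', e v u -> e v u' -> u != u' -> 1 <= \sum_(z in Rset e u u') g z) ->
  #|[set u | e v u]|%:R / 2 <= \sum_z g z.
Proof.
move=> g0 hp; rewrite sum_decomp sumN.
rewrite -[X in X <= _]add0r; apply: lerD; first exact: g0.
apply: pair_bound; last by apply: leq_trans nbr_card.
move=> u u'; rewrite !inE => hu hu' nuu'; apply: pair_legs => //; exact: hp.
Qed.

Definition h0 (z : T) : R := if e v z then 2^-1 else 0.

Lemma h0_ge0 z : 0 <= h0 z.
Proof. rewrite /h0; case: ifP => _; lra. Qed.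

Lemma h0_01 z : 0 <= h0 z <= 1.
Proof. rewrite h0_ge0 /h0; case: ifP => _ /=; lra. Qed.

Lemma h0_sum : \sum_z h0 z = #|[set u | e v u]|%:R / 2.
Proof.
rewrite /h0 -big_mkcond /= sumN sumr_const -(mulr_natr (2^-1 : R)).
by rewrite mulrC.
Qed.

Lemma h0_pair (A : {set T}) u1 u2 : u1 != u2 -> e v u1 -> e v u2 ->
  u1 \in A -> u2 \in A -> 1 <= \sum_(z in A) h0 z.
Proof.
move=> n12 h1 h2 a1 a2; apply: le_trans (two_le h0_ge0 n12 a1 a2).
rewrite /h0 h1 h2; lra.
Qed.

Lemma h0_res : resolving_fun e h0.
Proof.
split; first exact: h0_01.
move=> x y nxy; have [u1 [u2 [n12 h1 h2 d1 d2]]] := sep_pair nxy.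
by apply: (h0_pair n12 h1 h2); rewrite inE (dist_sym x) (dist_sym y).
Qed.

Lemma h0_kres k : (forall x, d v x <= k)%N -> k_resolving_fun e k h0.
Proof.
move=> hk; split; first exact: h0_01.
move=> x y nxy; have [u1 [u2 [n12 h1 h2 d1 d2]]] := sep_pair nxy.
have small u z : e v u -> (d u z <= k.+1)%N.
  move=> hu; apply: leq_trans (dist_tri u v z) _.
  by rewrite (dist_sym u v) (dist_edge hu) add1n ltnS.
apply: (h0_pair n12 h1 h2); rewrite inE /distk (dist_sym x) (dist_sym y).
  by rewrite (minn_idPl (small _ _ h1)) (minn_idPl (small _ _ h1)).
by rewrite (minn_idPl (small _ _ h2)) (minn_idPl (small _ _ h2)).
Qed.


Lemma Rk_to_R (g : T -> R) k x y : (forall z, 0 <= g z) ->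
  \sum_(z in Rkset e k x y) g z <= \sum_(z in Rset e x y) g z.
Proof. move=> g0; apply: sum_sub => // z; exact: Rk_sub. Qed.

Lemma strict_bound (g : T -> R) k l : (forall z, 0 <= g z) -> (0 < k)%N ->
  (forall x y, x != y -> 1 <= \sum_(z in Rkset e k x y) g z) ->
  is_leaf e l -> (k < d v l)%N -> (#|[set u | e v u]|%:R + 1) / 2 <= \sum_z g z.
Proof.
move=> g0 hk hres hl hkl.
have nlv : l != v.
  apply/negP => /eqP elv; move: hl; rewrite /is_leaf elv => /eqP h1.
  by move: hvmaj; rewrite /is_major h1.
have hb := br_spec nlv; set b := br l in hb.
have hbN : e v b by move: hb => /andP[].
have [xk [hxk dxk]] := anc hk hb (sym_equal (subnKC (ltnW hkl))).
have [xk1 [hxk1 dxk1]] := anc (ltn0Sn k) hb (sym_equal (subnKC hkl)).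
have nx : xk != xk1.
  apply/negP => /eqP ex; move: dxk1; rewrite -ex dxk => /eqP; by rewrite eqn_leq ltnn andbF.
have H1 : 1 <= g v + aleg g b.
  apply: le_trans (hres _ _ nx) _.
  apply: le_trans (sum_sub (P := fun z => (z == v) || inleg v b z) g0 _) _.
    exact: Rk_incl hxk hxk1 dxk dxk1.
  apply: le_trans (sum_or _ _ g0) _; by rewrite big_pred1_eq.
have hcard : #|[set u | e v u]| = #|[set u | e v u] :\ b|.+1.
  by rewrite (cardsD1 b) inE hbN.
have H2 : #|[set u | e v u] :\ b|%:R / 2 <= \sum_(u in [set u | e v u] :\ b) aleg g u.
  apply: pair_bound; last by have := nbr_card; rewrite hcard.
  move=> u u'; rewrite !in_setD1 !inE => /andP[_ hu] /andP[_ hu'] nuu'.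
  apply: pair_legs => //; apply: le_trans (Rk_to_R _ _ _ g0); exact: hres.
rewrite sum_decomp (bigD1 b) //=.
have -> : \sum_(i | e v i && (i != b)) aleg g i = \sum_(u in [set u | e v u] :\ b) aleg g u.
  by apply: eq_bigl => u; rewrite in_setD1 inE andbC.
move: H1 H2; rewrite hcard -[(#|_ :\ b|.+1)%:R]natr1.
move: (g v) (aleg g b) (\sum_(u in _ :\ b) aleg g u) (#|_ :\ b|%:R : R) => A B C D H1 H2.
lra.
Qed.

Lemma inf_eq (S : set R) c : S c -> (forall x, S x -> c <= x) -> inf S = c.
Proof.
move=> Sc lb; apply/le_anti/andP; split.
  by apply: ge_inf => //; exists c => x Sx; exact: lb.
by apply: lb_le_inf; [exists c | move=> x; exact: lb].
Qed.


Lemma main k : (0 < k)%N ->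
  (dimkf e R k = dimf e R <-> (forall l, is_terminal e l v -> (dist e v l <= k)%N)).
Proof.
move=> hk.
have hf : dimf e R = #|[set u | e v u]|%:R / 2.
  apply: inf_eq; first by exists h0; split; [exact: h0_res | by rewrite h0_sum].
  move=> x [g [[g01 gres] ->]]; apply: lower_bound.
    by move=> z; have /andP[] := g01 z.
  by move=> u u' _ _ n; exact: gres.
have lbk : forall x : R, (exists h, k_resolving_fun e k h /\ x = \sum_s h s) ->
    #|[set u | e v u]|%:R / 2 <= x.
  move=> x [g [[g01 gres] ->]].
  have g0 z : 0 <= g z by have /andP[] := g01 z.
  apply: lower_bound => // u u' _ _ n; apply: le_trans (Rk_to_R _ _ _ g0); exact: gres.
split.
- move=> heq l hl; rewrite leqNgt; apply/negP => hkl.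
  have /and3P[hleaf _ _] := hl.
  have hge : (#|[set u | e v u]|%:R + 1) / 2 <= dimkf e R k.
    apply: lb_le_inf.
      exists (\sum_(s : T) (1 : R)); exists (fun _ => 1); split => //; split.
        by move=> _; rewrite ler01 lexx.
      move=> x y nxy; apply: (one_le (u := x)); first by move=> _; exact: ler01.
      rewrite inE /distk dist_xx (minn_idPl (leq0n _)) eq_sym -lt0n.
      by rewrite leq_min ltn0Sn andbT; apply: dist_pos; rewrite eq_sym.
    move=> x [g [[g01 gres] ->]].
    have g0 z : 0 <= g z by have /andP[] := g01 z.
    exact: strict_bound g0 hk gres hleaf hkl.
  move: hge; rewrite heq hf; lra.
- move=> hall.
  have [u hu] : exists u, u \in [set u | e v u].
    by apply/card_gt0P; apply: leq_trans nbr_card.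
  move: hu; rewrite inE => hu.
  have [l [hleaf hmax]] := deep_leaf hu.
  have hterm : is_terminal e l v.
    rewrite /is_terminal hleaf hvmaj /=; apply/forallP => w; apply/implyP => /andP[hw nwv].
    by move: hw; rewrite /is_major => hw; have := hdeg nwv; rewrite leqNgt hw.
  have hdk x : (d v x <= k)%N by apply: leq_trans (hmax x) (hall _ hterm).
  rewrite hf; apply: inf_eq; last exact: lbk.
  by exists h0; split; [exact: h0_kres | rewrite h0_sum].
Qed.

End Reals.

End Spider.

End TreeBasics.


Theorem proposition3p18 (R : realType) (T : finType) (e : rel T) (k : nat) (v : T) :
  0 < k -> is_tree e -> ex_num e = 1 -> is_exterior_major e v ->
  (dimkf e R k = dimf e R <->
   (forall l : T, is_terminal e l v -> dist e v l <= k)).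
Proof.
move=> hk [[hsym hirr] hconn hacyc] hex hv.
have hmaj : is_major e v by move: hv => /andP[].
have hdeg : forall w, w != v -> deg e w <= 2.
  move=> w nwv; have := no_other_major hsym hirr hconn hacyc hv hex nwv.
  by rewrite /is_major -ltnNge ltnS.
exact: (main hsym hirr hconn hacyc hmaj hdeg R hk).
Qed.
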